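(* Consider, on a uniform one-dimensional grid $x_i=x_0+ih$, the semi-discrete scheme for $\partial_t u+\partial_x f(u)=s(x,t)$ (with $f$ a smooth nonlinear function and $s$ smooth) $$\Big(\frac{du}{dt}\Big)_i+\frac{1}{24}\Big[\Big(\frac{du}{dt}\Big)_{i+1}-2\Big(\frac{du}{dt}\Big)_i+\Big(\frac{du}{dt}\Big)_{i-1}\Big]+\frac{\phi_{i+1/2}-\phi_{i-1/2}}{h}=s(x_i)+\frac{1}{24}\big[s(x_{i+1})-2s(x_i)+s(x_{i-1})\big],$$ where $\phi_{i+1/2}=\tfrac12[f(u_L)+f(u_R)]-\tfrac12\,|f'(\bar u_{i+1/2})|\,(u_R-u_L)$ with $\bar u_{i+1/2}$ an intermediate state at the face $x_{i+1/2}$, and $u_L,u_R$ are given by the reconstruction with $\kappa=1/2$: $$u_L=u_i+\tfrac14\big[(1-\kappa)(u_i-u_{i-1})+(1+\kappa)(u_{i+1}-u_i)\big],\quad u_R=u_{i+1}-\tfrac14\big[(1-\kappa)(u_{i+1}-u_i)+(1+\kappa)(u_i-u_{i-1})\big].$$ (The source/time-derivative treatment is equivalently $s_i=s(x_i)+\tfrac{\kappa_s}{4}[s(x_{i+1})-2s(x_i)+s(x_{i-1})]$ with $\kappa_s=1/6$.) Then, for a smooth exact solution $u$ of $\partial_tu+\partial_xf(u)=s$ substituted pointwise ($u_i=u(x_i,t)$), the second-order truncation error is factored as $-\tfrac{1}{24}(u_t+f_x-s)_{xx}h^2$ and hence vanishes, so the truncation error of the scheme is $O(h^3)$, for general nonlinear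 $f$.
   Context: This is the one-dimensional U-MUSCL scheme with point-valued solutions and the special source (and time-derivative) discretization called U-MUSCL-SSQ. The truncation error is the residual (left side minus right side) evaluated with the exact solution's point values. *)

(* Defs.v *)
From Stdlib Require Import Reals.
From Coquelicot Require Import Coquelicot.
Open Scope R_scope.

Definition smooth (g : R -> R) : Prop := forall (n : nat) (x : R), ex_derive_n g n x.

Definition kappa : R := 1 / 2.

Definition recL (um1 u0 up1 : R) : R :=
  u0 + 1 / 4 * ((1 - kappa) * (u0 - um1) + (1 + kappa) * (up1 - u0)).

Definition recR (u0 up1 up2 : R) : R :=
  up1 - 1 / 4 * ((1 - kappa) * (up2 - up1) + (1 + kappa) * (up1 - u0)).

(* Upwind (Rusanov/Roe-type) numerical flux at face i+1/2;
   [avg uL uR] is the intermediate face state \bar u_{i+1/2}. *)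
Definition numflux (f : R -> R) (avg : R -> R -> R) (um1 u0 up1 up2 : R) : R :=
  let a := recL um1 u0 up1 in
  let b := recR u0 up1 up2 in
  1 / 2 * (f a + f b) - 1 / 2 * Rabs (Derive f (avg a b)) * (b - a).

Definition trunc_err (f : R -> R) (avg : R -> R -> R) (u s : R -> R -> R)
    (x t h : R) : R :=
  let U := fun y => u y t in
  let Ut := fun y => Derive (fun tau => u y tau) t in
  let S := fun y => s y t in
  Ut x + 1 / 24 * (Ut (x + h) - 2 * Ut x + Ut (x - h))
  + (numflux f avg (U (x - h)) (U x) (U (x + h)) (U (x + 2 * h))
     - numflux f avg (U (x - 2 * h)) (U (x - h)) (U x) (U (x + h))) / h
  - (S x + 1 / 24 * (S (x + h) - 2 * S x + S (x - h))).

(* Main.v *)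
Require Import Defs.
From Stdlib Require Import Reals Lra Lia.
From Coquelicot Require Import Coquelicot.
Open Scope R_scope.

Definition Sm (n : nat) (g : R -> R) : Prop :=
  forall k, (k <= n)%nat -> forall x, ex_derive_n g k x.

Lemma Dn_D (g : R -> R) n x : Derive_n (Derive g) n x = Derive_n g (S n) x.
Proof.
  replace (S n) with (n + 1)%nat by lia. rewrite <- (Derive_n_comp g n 1).
  reflexivity.
Qed.

Lemma Sm_S n g : Sm (S n) g <-> (forall x, ex_derive g x) /\ Sm n (Derive g).
Proof.
  split.
  - intros H. split.
    + intros x. exact (H 1%nat ltac:(lia) x).
    + intros k Hk x. destruct k as [|k]; [exact I|].
      simpl. apply ex_derive_ext with (f := Derive_n g (S k)).
      { intros t. symmetry. apply Dn_D. }
      exact (H (S (S k)) ltac:(lia) x).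
  - intros [H1 H2] k Hk x. destruct k as [|k]; [exact I|].
    destruct k as [|k]. { exact (H1 x). }
    simpl. apply ex_derive_ext with (f := Derive_n (Derive g) k).
    { intros t. apply Dn_D. }
    exact (H2 (S k) ltac:(lia) x).
Qed.

Lemma Sm_mono n g : Sm (S n) g -> Sm n g.
Proof. intros H k Hk. apply H. lia. Qed.

Lemma Sm_ext n f g : (forall t, f t = g t) -> Sm n f -> Sm n g.
Proof. intros He H k Hk x. apply ex_derive_n_ext with f; auto. Qed.

Lemma Sm_plus n f g : Sm n f -> Sm n g -> Sm n (fun x => f x + g x).
Proof.
  intros Hf Hg k Hk x. apply ex_derive_n_plus; apply filter_forall; intros y j Hj;
  [apply Hf|apply Hg]; lia.
Qed.

Lemma Sm_mult n : forall f g, Sm n f -> Sm n g -> Sm n (fun x => f x * g x).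
Proof.
  induction n as [|n IH]; intros f g Hf Hg.
  - intros k Hk x. replace k with 0%nat by lia. exact I.
  - apply Sm_S in Hf as Hf'. apply Sm_S in Hg as Hg'.
    destruct Hf' as [Hf1 Hf2]. destruct Hg' as [Hg1 Hg2].
    apply Sm_S. split.
    + intros x. apply ex_derive_mult; auto.
    + apply Sm_ext with (fun x => Derive f x * g x + f x * Derive g x).
      { intros t. symmetry. apply Derive_mult; auto. }
      apply Sm_plus; apply IH; auto; apply Sm_mono; auto.
Qed.

Lemma Sm_comp n : forall f g, Sm n f -> Sm n g -> Sm n (fun x => f (g x)).
Proof.
  induction n as [|n IH]; intros f g Hf Hg.
  - intros k Hk x. replace k with 0%nat by lia. exact I.
  - apply Sm_S in Hf as Hf'. apply Sm_S in Hg as Hg'.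
    destruct Hf' as [Hf1 Hf2]. destruct Hg' as [Hg1 Hg2].
    apply Sm_S. split.
    + intros x. apply ex_derive_comp; auto.
    + apply Sm_ext with (fun x => Derive g x * Derive f (g x)).
      { intros t. symmetry. apply Derive_comp; auto. }
      apply Sm_mult; auto. apply IH; auto. apply Sm_mono; auto.
Qed.

Lemma smooth_Sm g : smooth g <-> forall n, Sm n g.
Proof.
  split. - intros H n k _ x. apply H. - intros H n x. apply (H n n). lia.
Qed.

Lemma smooth_comp f g : smooth f -> smooth g -> smooth (fun x => f (g x)).
Proof.
  rewrite !smooth_Sm. intros Hf Hg n. apply Sm_comp; auto.
Qed.

Lemma smooth_D g : smooth g -> smooth (Derive g).
Proof.
  rewrite !smooth_Sm. intros H n. apply (Sm_S n g). auto.
Qed.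

Lemma bound_cont (g : R -> R) lo hi : (forall y, ex_derive g y) ->
  exists K, 0 <= K /\ forall y, lo <= y <= hi -> Rabs (g y) <= K.
Proof.
  intros H. destruct (Rle_dec lo hi) as [Hl|Hl].
  - destruct (continuity_ab_maj (fun y => Rabs (g y)) lo hi Hl) as [M [HM _]].
    + intros c _. apply (continuity_pt_comp g Rabs).
      * apply continuity_pt_filterlim. exact (ex_derive_continuous g c (H c)).
      * apply Rcontinuity_abs.
    + exists (Rabs (g M)). split; [apply Rabs_pos|]. exact HM.
  - exists 0. split; [lra|]. intros y Hy. lra.
Qed.

Lemma sum0 (g : nat -> R) n : sum_f_R0 (fun m => 0 ^ m / INR (Factorial.fact m) * g m) n = g 0%nat.
Proof.
  induction n as [|n IH].
  - simpl. unfold Rdiv. rewrite Rinv_1. ring.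
  - rewrite tech5, IH. simpl. unfold Rdiv. rewrite !Rmult_0_l, Rplus_0_r. reflexivity.
Qed.

Lemma taylor g n lo hi : smooth g ->
  exists M, 0 <= M /\ forall a d, lo <= a <= hi -> lo <= a + d <= hi ->
    Rabs (g (a + d) - sum_f_R0 (fun m => d ^ m / INR (Factorial.fact m) * Derive_n g m a) n)
      <= M * Rabs d ^ (S n).
Proof.
  intros Hg.
  destruct (bound_cont (Derive_n g (S n)) lo hi) as [K [HK0 HK]].
  { intros y. exact (Hg (S (S n)) y). }
  assert (Hf : 0 < INR (Factorial.fact (S n))) by (apply lt_0_INR; apply Factorial.lt_O_fact).
  exists (K / INR (Factorial.fact (S n))). split.
  { apply Rmult_le_pos; [lra|]. apply Rlt_le, Rinv_0_lt_compat; lra. }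
  intros a d Ha Had.
  destruct (Rtotal_order d 0) as [Hd|[Hd|Hd]].
  -
    set (g2 := fun y => g (- y)).
    assert (Hs2 : forall k y, ex_derive_n g2 k y).
    { intros k y. apply ex_derive_n_comp_opp. apply filter_forall. intros z j _. apply Hg. }
    assert (HD2 : forall k y, Derive_n g2 k y = (-1) ^ k * Derive_n g k (- y)).
    { intros k y. apply Derive_n_comp_opp. apply filter_forall. intros z j _. apply Hg. }
    destruct (Taylor_Lagrange g2 n (- a) (- (a + d))) as [z [Hz Hz2]].
    { lra. }
    { intros; apply Hs2. }
    unfold g2 at 1 in Hz2. rewrite Ropp_involutive in Hz2. rewrite Hz2.
    rewrite (sum_eq _ (fun m => d ^ m / INR (Factorial.fact m) * Derive_n g m a)).
    2:{ intros i _. rewrite HD2, Ropp_involutive.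
        replace (- (a + d) - - a) with ((-1) * d) by ring. rewrite Rpow_mult_distr.
        assert (Hm : (-1)^i * (-1)^i = 1).
        { rewrite <- Rpow_mult_distr. replace (-1 * -1) with 1 by ring. apply pow1. }
        transitivity (((-1)^i * (-1)^i) * (d ^ i / INR (Factorial.fact i) * Derive_n g i a)).
        { unfold Rdiv. ring. } rewrite Hm. ring. }
    replace (sum_f_R0 (fun m : nat => d ^ m / INR (Factorial.fact m) * Derive_n g m a) n +
      (- (a + d) - - a) ^ S n / INR (Factorial.fact (S n)) * Derive_n g2 (S n) z -
      sum_f_R0 (fun m : nat => d ^ m / INR (Factorial.fact m) * Derive_n g m a) n)
      with ((- (a + d) - - a) ^ S n / INR (Factorial.fact (S n)) * Derive_n g2 (S n) z) by ring.
    rewrite HD2. rewrite !Rabs_mult. rewrite Rabs_div by lra.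
    rewrite <- RPow_abs. rewrite (Rabs_pos_eq (INR _)) by lra.
    rewrite <- (RPow_abs (-1)). rewrite Rabs_m1, pow1, Rmult_1_l.
    replace (Rabs (- (a + d) - - a)) with (Rabs d).
    2:{ replace (- (a + d) - - a) with (- d) by ring. symmetry; apply Rabs_Ropp. }
    assert (Hb : Rabs (Derive_n g (S n) (- z)) <= K) by (apply HK; lra).
    assert (0 <= Rabs d ^ S n) by (apply pow_le, Rabs_pos).
    unfold Rdiv. 
    assert (0 < / INR (Factorial.fact (S n))) by (apply Rinv_0_lt_compat; lra).
    replace (K * / INR (Factorial.fact (S n)) * Rabs d ^ S n) with
      (Rabs d ^ S n * / INR (Factorial.fact (S n)) * K) by ring.
    apply Rmult_le_compat_l; [|exact Hb]. apply Rmult_le_pos; lra.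
  - subst d. rewrite sum0. simpl Derive_n. rewrite Rplus_0_r.
    replace (g a - g a) with 0 by ring. rewrite Rabs_R0.
    simpl. rewrite Rmult_0_l, Rmult_0_r. lra.
  - destruct (Taylor_Lagrange g n a (a + d)) as [z [Hz Hz2]].
    { lra. }
    { intros; apply Hg. }
    rewrite Hz2. replace (a + d - a) with d by ring.
    replace (sum_f_R0 (fun m : nat => d ^ m / INR (Factorial.fact m) * Derive_n g m a) n +
      d ^ S n / INR (Factorial.fact (S n)) * Derive_n g (S n) z -
      sum_f_R0 (fun m : nat => d ^ m / INR (Factorial.fact m) * Derive_n g m a) n)
      with (d ^ S n / INR (Factorial.fact (S n)) * Derive_n g (S n) z) by ring.
    rewrite !Rabs_mult. rewrite Rabs_div by lra.
    rewrite <- RPow_abs. rewrite (Rabs_pos_eq (INR _)) by lra.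
    assert (Hb : Rabs (Derive_n g (S n) z) <= K) by (apply HK; lra).
    assert (0 <= Rabs d ^ S n) by (apply pow_le, Rabs_pos).
    unfold Rdiv. 
    assert (0 < / INR (Factorial.fact (S n))) by (apply Rinv_0_lt_compat; lra).
    replace (K * / INR (Factorial.fact (S n)) * Rabs d ^ S n) with
      (Rabs d ^ S n * / INR (Factorial.fact (S n)) * K) by ring.
    apply Rmult_le_compat_l; [|exact Hb]. apply Rmult_le_pos; lra.
Qed.

Lemma sumT0 g a d : sum_f_R0 (fun m => d ^ m / INR (Factorial.fact m) * Derive_n g m a) 0 = g a.
Proof. simpl. field. Qed.
Lemma sumT1 g a d : sum_f_R0 (fun m => d ^ m / INR (Factorial.fact m) * Derive_n g m a) 1
  = g a + d * Derive_n g 1 a.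
Proof. cbn [sum_f_R0 Factorial.fact Nat.mul Nat.add INR]. change (Derive_n g 0 a) with (g a). field. Qed.
Lemma sumT2 g a d : sum_f_R0 (fun m => d ^ m / INR (Factorial.fact m) * Derive_n g m a) 2
  = g a + d * Derive_n g 1 a + d^2/2 * Derive_n g 2 a.
Proof. cbn [sum_f_R0 Factorial.fact Nat.mul Nat.add INR]. change (Derive_n g 0 a) with (g a). field. Qed.
Lemma sumT3 g a d : sum_f_R0 (fun m => d ^ m / INR (Factorial.fact m) * Derive_n g m a) 3
  = g a + d * Derive_n g 1 a + d^2/2 * Derive_n g 2 a + d^3/6 * Derive_n g 3 a.
Proof. cbn [sum_f_R0 Factorial.fact Nat.mul Nat.add INR]. change (Derive_n g 0 a) with (g a). field. Qed.
Lemma sumT4 g a d : sum_f_R0 (fun m => d ^ m / INR (Factorial.fact m) * Derive_n g m a) 4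
  = g a + d * Derive_n g 1 a + d^2/2 * Derive_n g 2 a + d^3/6 * Derive_n g 3 a + d^4/24 * Derive_n g 4 a.
Proof. cbn [sum_f_R0 Factorial.fact Nat.mul Nat.add INR]. change (Derive_n g 0 a) with (g a). field. Qed.

Lemma tay' g n lo hi : smooth g ->
  exists M, 0 <= M /\ forall h a k ka y, 0 < h -> Rabs k = ka -> y = a + k * h ->
    lo <= a <= hi -> lo <= y <= hi ->
    - (M * ka ^ (S n) * h ^ (S n)) <=
      g y - sum_f_R0 (fun m => (k * h) ^ m / INR (Factorial.fact m) * Derive_n g m a) n
    <= M * ka ^ (S n) * h ^ (S n).
Proof.
  intros Hg. destruct (taylor g n lo hi Hg) as [M [HM T]].
  exists M. split; auto. intros h a k ka y Hh Hk Hy Ha Hya. subst y.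
  apply Rabs_le_between. specialize (T a (k*h) Ha Hya).
  rewrite Rabs_mult, (Rabs_pos_eq h) in T by lra. rewrite Hk in T.
  rewrite Rpow_mult_distr in T. rewrite <- Rmult_assoc in T. exact T.
Qed.

Lemma absc k ka : (0 <= k -> ka = k) -> (k < 0 -> ka = - k) -> Rabs k = ka.
Proof. intros H1 H2. unfold Rabs. destruct (Rcase_abs k); [rewrite H2|rewrite H1]; lra. Qed.

Lemma between_avg a b A c r : Rmin a b <= A <= Rmax a b ->
  Rabs (a - c) <= r -> Rabs (b - c) <= r -> Rabs (A - c) <= r.
Proof.
  intros HA H1 H2. apply Rabs_le_between in H1. apply Rabs_le_between in H2.
  apply Rabs_le_between. unfold Rmin, Rmax in HA.
  destruct (Rle_dec a b); lra.
Qed.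

Lemma sq_le x c : Rabs x <= c -> x ^ 2 <= c ^ 2.
Proof. intros H. apply Rabs_le_between in H. nra. Qed.

Lemma abs_mul_le x y a b : Rabs x <= a -> Rabs y <= b -> Rabs (x * y) <= a * b.
Proof.
  intros H1 H2. rewrite Rabs_mult. apply Rmult_le_compat; auto; apply Rabs_pos.
Qed.

Lemma face_c (f : R -> R) (V B P1 K L1 L3 h w1 w2 w3 w4 m d1 e1 e2 e3 : R) :
  0 < h -> 0 <= L1 -> 0 <= L3 -> 0 <= P1 -> 0 <= K -> V = 2 * B ->
  (forall y z, -V <= y <= V -> -V <= z <= V ->
     Rabs (f z - (f y + (z - y) * Derive f y)) <= P1 * (z - y) ^ 2) ->
  (forall y, -V <= y <= V -> Rabs (Derive f y) <= K) ->
  Rabs w1 <= B -> Rabs w2 <= B -> Rabs w3 <= B -> Rabs w4 <= B -> Rabs m <= B ->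
  Rabs (w1 - (m + (-3/2 * h) * d1)) <= L1 * (3/2)^2 * h^2 ->
  Rabs (w2 - (m + (-1/2 * h) * d1)) <= L1 * (1/2)^2 * h^2 ->
  Rabs (w3 - (m + (1/2 * h) * d1)) <= L1 * (1/2)^2 * h^2 ->
  Rabs (w4 - (m + (3/2 * h) * d1)) <= L1 * (3/2)^2 * h^2 ->
  Rabs (w1 - (m + (-3/2*h)*e1 + (-3/2*h)^2/2*e2 + (-3/2*h)^3/6*e3)) <= L3 * (3/2)^4 * h^4 ->
  Rabs (w2 - (m + (-1/2*h)*e1 + (-1/2*h)^2/2*e2 + (-1/2*h)^3/6*e3)) <= L3 * (1/2)^4 * h^4 ->
  Rabs (w3 - (m + (1/2*h)*e1 + (1/2*h)^2/2*e2 + (1/2*h)^3/6*e3)) <= L3 * (1/2)^4 * h^4 ->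
  Rabs (w4 - (m + (3/2*h)*e1 + (3/2*h)^2/2*e2 + (3/2*h)^3/6*e3)) <= L3 * (3/2)^4 * h^4 ->
  Rabs (1 / 2 * (f (recL w1 w2 w3) + f (recR w2 w3 w4)) - f m)
    <= (K * L3 + P1 * (9/16 * L1) ^ 2) * h ^ 4.
Proof.
  intros Hh HL1 HL3 HP1 HK0 HV Hf1 HK Hw1 Hw2 Hw3 Hw4 Hm
    A1 A2 A3 A4 C1 C2 C3 C4.
  apply Rabs_le_between in Hw1, Hw2, Hw3, Hw4, Hm, A1, A2, A3, A4, C1, C2, C3, C4.
  unfold recL, recR, kappa.
  set (a := w2 + 1 / 4 * ((1 - 1 / 2) * (w2 - w1) + (1 + 1 / 2) * (w3 - w2))).
  set (b := w3 - 1 / 4 * ((1 - 1 / 2) * (w4 - w3) + (1 + 1 / 2) * (w3 - w2))).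
  assert (Hh2 : 0 <= L1 * h^2) by (apply Rmult_le_pos; [lra| apply pow_le; lra]).
  assert (Hh4 : 0 <= L3 * h^4) by (apply Rmult_le_pos; [lra| apply pow_le; lra]).
  assert (Ha : Rabs (a - m) <= 9/16 * L1 * h^2).
  { apply Rabs_le_between. unfold a. lra. }
  assert (Hb : Rabs (b - m) <= 9/16 * L1 * h^2).
  { apply Rabs_le_between. unfold b. lra. }
  assert (Hab : Rabs ((a + b) / 2 - m) <= L3 * h^4).
  { apply Rabs_le_between. unfold a, b. lra. }
  assert (Hra : -V <= a <= V) by (unfold a; lra).
  assert (Hrb : -V <= b <= V) by (unfold b; lra).
  assert (Hrm : -V <= m <= V) by lra.
  pose proof (Hf1 m a Hrm Hra) as Fa. pose proof (Hf1 m b Hrm Hrb) as Fb.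
  pose proof (HK m Hrm) as Km.
  pose proof (sq_le _ _ Ha) as Sa. pose proof (sq_le _ _ Hb) as Sb.
  pose proof (abs_mul_le _ _ _ _ Hab Km) as Pm.
  replace (1 / 2 * (f a + f b) - f m) with
    (1/2 * (f a - (f m + (a - m) * Derive f m)) + 1/2 * (f b - (f m + (b - m) * Derive f m))
      + ((a + b) / 2 - m) * Derive f m) by field.
  apply Rabs_le_between in Fa, Fb, Pm. apply Rabs_le_between.
  assert (P1 * (a - m) ^ 2 <= P1 * (9 / 16 * L1 * h ^ 2) ^ 2) by (apply Rmult_le_compat_l; lra).
  assert (P1 * (b - m) ^ 2 <= P1 * (9 / 16 * L1 * h ^ 2) ^ 2) by (apply Rmult_le_compat_l; lra).
  replace ((K * L3 + P1 * (9 / 16 * L1) ^ 2) * h ^ 4) with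
    (L3 * h^4 * K + P1 * (9 / 16 * L1 * h ^ 2) ^ 2) by ring.
  lra.
Qed.

Lemma diss (f : R -> R) (avg : R -> R -> R) (V Q K L0 L2 L3 h vm2 vm1 v0 v1 v2 E1 E2 F1 F2 F3 : R) :
  0 < h -> h < 1 -> 0 <= L0 -> 0 <= L2 -> 0 <= L3 -> 0 <= Q -> 0 <= K ->
  (forall a b, Rmin a b <= avg a b <= Rmax a b) ->
  (forall y, -V <= y <= V -> Rabs (Derive f y) <= K) ->
  (forall y z, -V <= y <= V -> -V <= z <= V -> Rabs (Derive f z - Derive f y) <= Q * Rabs (z - y)) ->
  Rabs v0 + 2 * L0 <= V ->
  Rabs (vm2 - v0) <= L0 * 2 * h -> Rabs (vm1 - v0) <= L0 * 1 * h ->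
  Rabs (v1 - v0) <= L0 * 1 * h -> Rabs (v2 - v0) <= L0 * 2 * h ->
  Rabs (vm2 - (v0 + (-2*h)*E1 + (-2*h)^2/2*E2)) <= L2 * 2^3 * h^3 ->
  Rabs (vm1 - (v0 + (-1*h)*E1 + (-1*h)^2/2*E2)) <= L2 * 1^3 * h^3 ->
  Rabs (v1 - (v0 + (1*h)*E1 + (1*h)^2/2*E2)) <= L2 * 1^3 * h^3 ->
  Rabs (vm2 - (v0 + (-2*h)*F1 + (-2*h)^2/2*F2 + (-2*h)^3/6*F3)) <= L3 * 2^4 * h^4 ->
  Rabs (vm1 - (v0 + (-1*h)*F1 + (-1*h)^2/2*F2 + (-1*h)^3/6*F3)) <= L3 * 1^4 * h^4 ->
  Rabs (v1 - (v0 + (1*h)*F1 + (1*h)^2/2*F2 + (1*h)^3/6*F3)) <= L3 * 1^4 * h^4 ->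
  Rabs (v2 - (v0 + (2*h)*F1 + (2*h)^2/2*F2 + (2*h)^3/6*F3)) <= L3 * 2^4 * h^4 ->
  Rabs (1 / 2 * Rabs (Derive f (avg (recL vm1 v0 v1) (recR v0 v1 v2))) * (recR v0 v1 v2 - recL vm1 v0 v1)
      - 1 / 2 * Rabs (Derive f (avg (recL vm2 vm1 v0) (recR vm1 v0 v1))) * (recR vm1 v0 v1 - recL vm2 vm1 v0))
    <= (40 * K * L3 + 36 * Q * L0 * L2) / 16 * h ^ 4.
Proof.
  intros Hh Hh1 HL0 HL2 HL3 HQ HK0 Havg HK HQf HV O1 O2 O3 O4 P1 P2 P3 R1 R2 R3 R4.
  set (A1 := avg (recL vm1 v0 v1) (recR v0 v1 v2)).
  set (A2 := avg (recL vm2 vm1 v0) (recR vm1 v0 v1)).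
  assert (HA1 := Havg (recL vm1 v0 v1) (recR v0 v1 v2)). fold A1 in HA1.
  assert (HA2 := Havg (recL vm2 vm1 v0) (recR vm1 v0 v1)). fold A2 in HA2.
  apply Rabs_le_between in O1, O2, O3, O4, P1, P2, P3, R1, R2, R3, R4.
  assert (HL0h : 0 <= L0 * h) by nra.
  assert (HL0h1 : L0 * h <= L0) by nra.
  assert (H1 : Rabs (A1 - v0) <= 3/2 * L0 * h).
  { apply (between_avg _ _ _ _ _ HA1); apply Rabs_le_between; unfold recL, recR, kappa; lra. }
  assert (H2 : Rabs (A2 - v0) <= 3/2 * L0 * h).
  { apply (between_avg _ _ _ _ _ HA2); apply Rabs_le_between; unfold recL, recR, kappa; lra. }
  apply Rabs_le_between in H1, H2.
  assert (Hv0 := Rabs_le_between v0 (Rabs v0)). destruct Hv0 as [Hv0 _].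
  specialize (Hv0 (Rle_refl _)).
  assert (Hr1 : -V <= A1 <= V) by lra.
  assert (Hr2 : -V <= A2 <= V) by lra.
  assert (Hd : Rabs (Rabs (Derive f A1) - Rabs (Derive f A2)) <= Q * (3 * L0 * h)).
  { eapply Rle_trans. apply Rabs_triang_inv2. eapply Rle_trans. apply (HQf A2 A1 Hr2 Hr1).
    apply Rmult_le_compat_l; auto. apply Rabs_le_between. lra. }
  set (Tp := v2 - 3 * v1 + 3 * v0 - vm1).
  set (Tm := v1 - 3 * v0 + 3 * vm1 - vm2).
  assert (HT : Rabs (Tp - Tm) <= 40 * L3 * h^4).
  { apply Rabs_le_between. unfold Tp, Tm. lra. }
  assert (HTm : Rabs Tm <= 12 * L2 * h^3).
  { apply Rabs_le_between. unfold Tm. lra. }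
  assert (HK1 : Rabs (Rabs (Derive f A1)) <= K) by (rewrite Rabs_Rabsolu; auto).
  pose proof (abs_mul_le _ _ _ _ HK1 HT) as M1.
  pose proof (abs_mul_le _ _ _ _ Hd HTm) as M2.
  replace (1 / 2 * Rabs (Derive f A1) * (recR v0 v1 v2 - recL vm1 v0 v1) -
     1 / 2 * Rabs (Derive f A2) * (recR vm1 v0 v1 - recL vm2 vm1 v0))
    with (- (1/16) * (Rabs (Derive f A1) * (Tp - Tm) + (Rabs (Derive f A1) - Rabs (Derive f A2)) * Tm)).
  2:{ unfold Tp, Tm, recL, recR, kappa. field. }
  apply Rabs_le_between in M1, M2. apply Rabs_le_between.
  replace ((40 * K * L3 + 36 * Q * L0 * L2) / 16 * h ^ 4) with
    (1/16 * (K * (40 * L3 * h ^ 4) + Q * (3 * L0 * h) * (12 * L2 * h ^ 3))) by field.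
  lra.
Qed.

Lemma scale_b h b r : 0 <= h -> -b <= r <= b -> -(h*b) <= h*r <= h*b.
Proof. intros H [H1 H2]. split; nra. Qed.

Lemma core (f : R -> R) (avg : R -> R -> R) (U Ut S : R -> R) (x : R) :
  smooth f -> (forall a b, Rmin a b <= avg a b <= Rmax a b) -> smooth U ->
  (forall y, Ut y + Derive (fun z => f (U z)) y = S y) ->
  exists C delta, 0 < delta /\ forall h, 0 < h < delta ->
   Rabs (Ut x + 1 / 24 * (Ut (x + h) - 2 * Ut x + Ut (x - h))
  + (numflux f avg (U (x - h)) (U x) (U (x + h)) (U (x + 2 * h))
     - numflux f avg (U (x - 2 * h)) (U (x - h)) (U x) (U (x + h))) / h
  - (S x + 1 / 24 * (S (x + h) - 2 * S x + S (x - h)))) <= C * h ^ 3.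
Proof.
  intros Hf Havg HU Heq.
  pose proof (smooth_comp f U Hf HU) as HF.
  pose proof (smooth_D _ HF) as HdF.
  pose proof (smooth_D _ Hf) as Hdf.
  destruct (tay' U 0 (x - 2) (x + 2) HU) as [L0 [HL0 TU0]].
  destruct (tay' U 1 (x - 2) (x + 2) HU) as [L1 [HL1 TU1]].
  destruct (tay' U 2 (x - 2) (x + 2) HU) as [L2 [HL2 TU2]].
  destruct (tay' U 3 (x - 2) (x + 2) HU) as [L3 [HL3 TU3]].
  destruct (tay' (fun z => f (U z)) 4 (x - 2) (x + 2) HF) as [M4 [HM4 TF]].
  destruct (tay' (Derive (fun z => f (U z))) 3 (x - 2) (x + 2) HdF) as [N3 [HN3 TG]].
  set (B := Rabs (U x) + 2 * L0).
  assert (HB0 : 0 <= B) by (unfold B; pose proof (Rabs_pos (U x)); lra).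
  assert (HB : forall y, x - 2 <= y <= x + 2 -> Rabs (U y) <= B).
  { intros y Hy.
    pose proof (TU0 1 x (y - x) (Rabs (y - x)) y Rlt_0_1 eq_refl ltac:(ring) ltac:(lra) Hy) as T.
    rewrite sumT0 in T.
    assert (Rabs (y - x) <= 2) by (apply Rabs_le_between; lra).
    assert (L0 * Rabs (y - x) <= L0 * 2) by (apply Rmult_le_compat_l; lra).
    replace (U y) with (U x + (U y - U x)) by ring.
    eapply Rle_trans. apply Rabs_triang. unfold B. apply Rplus_le_compat_l.
    apply Rabs_le_between. rewrite pow1 in T. simpl pow in T. lra. }
  set (V := 2 * B).
  destruct (tay' f 1 (-V) V Hf) as [P1 [HP1 Tf]].
  destruct (tay' (Derive f) 0 (-V) V Hdf) as [Q [HQ TQ]].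
  assert (Hf1 : forall y z, -V <= y <= V -> -V <= z <= V ->
     Rabs (f z - (f y + (z - y) * Derive f y)) <= P1 * (z - y) ^ 2).
  { intros y z Hy Hz.
    pose proof (Tf 1 y (z - y) (Rabs (z - y)) z Rlt_0_1 eq_refl ltac:(ring) Hy Hz) as T.
    rewrite sumT1 in T. change (Derive_n f 1 y) with (Derive f y) in T.
    rewrite <- (pow2_abs (z - y)). apply Rabs_le_between. rewrite pow1 in T. lra. }
  assert (HQf : forall y z, -V <= y <= V -> -V <= z <= V ->
     Rabs (Derive f z - Derive f y) <= Q * Rabs (z - y)).
  { intros y z Hy Hz.
    pose proof (TQ 1 y (z - y) (Rabs (z - y)) z Rlt_0_1 eq_refl ltac:(ring) Hy Hz) as T.
    rewrite sumT0 in T. apply Rabs_le_between. rewrite pow1 in T. simpl pow in T. lra. }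
  set (K := Rabs (Derive f 0) + Q * V).
  assert (HK0 : 0 <= K).
  { unfold K. pose proof (Rabs_pos (Derive f 0)). assert (0 <= Q * V) by (unfold V; nra). lra. }
  assert (HK : forall y, -V <= y <= V -> Rabs (Derive f y) <= K).
  { intros y Hy. assert (H0 : -V <= 0 <= V) by (unfold V; lra).
    pose proof (HQf 0 y H0 Hy) as T.
    assert (Rabs (y - 0) <= V) by (apply Rabs_le_between; lra).
    assert (Q * Rabs (y - 0) <= Q * V) by (apply Rmult_le_compat_l; lra).
    replace (Derive f y) with (Derive f 0 + (Derive f y - Derive f 0)) by ring.
    eapply Rle_trans. apply Rabs_triang. unfold K. lra. }
  exists ((M4 / 16 + N3 / 12) + 2 * (K * L3 + P1 * (9/16 * L1) ^ 2)
          + (40 * K * L3 + 36 * Q * L0 * L2) / 16), 1.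
  split; [lra|]. intros h [Hh0 Hh1].

  assert (Hab : forall k, -2 <= k <= 2 -> Rabs k = Rabs k) by auto.
  pose proof (TF h x (1/2) (1/2) (x + h/2) Hh0 ltac:(apply absc; lra) ltac:(field) ltac:(lra) ltac:(lra)) as F1.
  pose proof (TF h x (-1/2) (1/2) (x - h/2) Hh0 ltac:(apply absc; lra) ltac:(field) ltac:(lra) ltac:(lra)) as F2.
  pose proof (TG h x 1 1 (x + h) Hh0 ltac:(apply absc; lra) ltac:(ring) ltac:(lra) ltac:(lra)) as G1.
  pose proof (TG h x (-1) 1 (x - h) Hh0 ltac:(apply absc; lra) ltac:(ring) ltac:(lra) ltac:(lra)) as G2.
  rewrite sumT4 in F1, F2. rewrite sumT3 in G1, G2. cbv beta in F1, F2.
  rewrite !Dn_D in G1, G2.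
  change (Derive_n (fun z => f (U z)) 1 x) with (Derive (fun z => f (U z)) x) in F1, F2.
  apply (scale_b h) in G1; [|lra]. apply (scale_b h) in G2; [|lra].
  set (G := Derive (fun z => f (U z))) in *.
  assert (X1 : Rabs (f (U (x + h/2)) - f (U (x - h/2)) - h * G x - h / 24 * (G (x + h) - 2 * G x + G (x - h)))
     <= (M4 / 16 + N3 / 12) * h ^ 5).
  { apply Rabs_le_between. lra. }

  assert (Rg : forall y, x - 2 <= y <= x + 2 -> Rabs (U y) <= B) by exact HB.
  set (p := x + h/2).
  assert (X2 : Rabs (1 / 2 * (f (recL (U (x - h)) (U x) (U (x + h))) + f (recR (U x) (U (x + h)) (U (x + 2 * h)))) - f (U p))
    <= (K * L3 + P1 * (9/16 * L1) ^ 2) * h ^ 4).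
  { pose proof (TU1 h p (-3/2) (3/2) (x - h) Hh0 ltac:(apply absc; lra) ltac:(unfold p; field) ltac:(unfold p; lra) ltac:(lra)) as A1.
    pose proof (TU1 h p (-1/2) (1/2) x Hh0 ltac:(apply absc; lra) ltac:(unfold p; field) ltac:(unfold p; lra) ltac:(lra)) as A2.
    pose proof (TU1 h p (1/2) (1/2) (x + h) Hh0 ltac:(apply absc; lra) ltac:(unfold p; field) ltac:(unfold p; lra) ltac:(lra)) as A3.
    pose proof (TU1 h p (3/2) (3/2) (x + 2 * h) Hh0 ltac:(apply absc; lra) ltac:(unfold p; field) ltac:(unfold p; lra) ltac:(lra)) as A4.
    pose proof (TU3 h p (-3/2) (3/2) (x - h) Hh0 ltac:(apply absc; lra) ltac:(unfold p; field) ltac:(unfold p; lra) ltac:(lra)) as C1.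
    pose proof (TU3 h p (-1/2) (1/2) x Hh0 ltac:(apply absc; lra) ltac:(unfold p; field) ltac:(unfold p; lra) ltac:(lra)) as C2.
    pose proof (TU3 h p (1/2) (1/2) (x + h) Hh0 ltac:(apply absc; lra) ltac:(unfold p; field) ltac:(unfold p; lra) ltac:(lra)) as C3.
    pose proof (TU3 h p (3/2) (3/2) (x + 2 * h) Hh0 ltac:(apply absc; lra) ltac:(unfold p; field) ltac:(unfold p; lra) ltac:(lra)) as C4.
    rewrite sumT1 in A1, A2, A3, A4. rewrite sumT3 in C1, C2, C3, C4.
    eapply face_c with (V := V) (B := B) (d1 := Derive_n U 1 p) (e1 := Derive_n U 1 p)
      (e2 := Derive_n U 2 p) (e3 := Derive_n U 3 p); try eassumption; try lra;
      try (apply Rabs_le_between; lra);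
      try (apply Rg; unfold p; lra).
    all: reflexivity. }
  set (q := x - h/2).
  assert (X3 : Rabs (1 / 2 * (f (recL (U (x - 2 * h)) (U (x - h)) (U x)) + f (recR (U (x - h)) (U x) (U (x + h)))) - f (U q))
    <= (K * L3 + P1 * (9/16 * L1) ^ 2) * h ^ 4).
  { pose proof (TU1 h q (-3/2) (3/2) (x - 2 * h) Hh0 ltac:(apply absc; lra) ltac:(unfold q; field) ltac:(unfold q; lra) ltac:(lra)) as A1.
    pose proof (TU1 h q (-1/2) (1/2) (x - h) Hh0 ltac:(apply absc; lra) ltac:(unfold q; field) ltac:(unfold q; lra) ltac:(lra)) as A2.
    pose proof (TU1 h q (1/2) (1/2) x Hh0 ltac:(apply absc; lra) ltac:(unfold q; field) ltac:(unfold q; lra) ltac:(lra)) as A3.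
    pose proof (TU1 h q (3/2) (3/2) (x + h) Hh0 ltac:(apply absc; lra) ltac:(unfold q; field) ltac:(unfold q; lra) ltac:(lra)) as A4.
    pose proof (TU3 h q (-3/2) (3/2) (x - 2 * h) Hh0 ltac:(apply absc; lra) ltac:(unfold q; field) ltac:(unfold q; lra) ltac:(lra)) as C1.
    pose proof (TU3 h q (-1/2) (1/2) (x - h) Hh0 ltac:(apply absc; lra) ltac:(unfold q; field) ltac:(unfold q; lra) ltac:(lra)) as C2.
    pose proof (TU3 h q (1/2) (1/2) x Hh0 ltac:(apply absc; lra) ltac:(unfold q; field) ltac:(unfold q; lra) ltac:(lra)) as C3.
    pose proof (TU3 h q (3/2) (3/2) (x + h) Hh0 ltac:(apply absc; lra) ltac:(unfold q; field) ltac:(unfold q; lra) ltac:(lra)) as C4.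
    rewrite sumT1 in A1, A2, A3, A4. rewrite sumT3 in C1, C2, C3, C4.
    eapply face_c with (V := V) (B := B) (d1 := Derive_n U 1 q) (e1 := Derive_n U 1 q)
      (e2 := Derive_n U 2 q) (e3 := Derive_n U 3 q); try eassumption; try lra;
      try (apply Rabs_le_between; lra);
      try (apply Rg; unfold q; lra).
    all: reflexivity. }

  assert (X4 : Rabs (1 / 2 * Rabs (Derive f (avg (recL (U (x - h)) (U x) (U (x + h))) (recR (U x) (U (x + h)) (U (x + 2 * h))))) * (recR (U x) (U (x + h)) (U (x + 2 * h)) - recL (U (x - h)) (U x) (U (x + h)))
      - 1 / 2 * Rabs (Derive f (avg (recL (U (x - 2 * h)) (U (x - h)) (U x)) (recR (U (x - h)) (U x) (U (x + h))))) * (recR (U (x - h)) (U x) (U (x + h)) - recL (U (x - 2 * h)) (U (x - h)) (U x)))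
    <= (40 * K * L3 + 36 * Q * L0 * L2) / 16 * h ^ 4).
  { pose proof (TU0 h x (-2) 2 (x - 2 * h) Hh0 ltac:(apply absc; lra) ltac:(ring) ltac:(lra) ltac:(lra)) as O1.
    pose proof (TU0 h x (-1) 1 (x - h) Hh0 ltac:(apply absc; lra) ltac:(ring) ltac:(lra) ltac:(lra)) as O2.
    pose proof (TU0 h x 1 1 (x + h) Hh0 ltac:(apply absc; lra) ltac:(ring) ltac:(lra) ltac:(lra)) as O3.
    pose proof (TU0 h x 2 2 (x + 2 * h) Hh0 ltac:(apply absc; lra) ltac:(ring) ltac:(lra) ltac:(lra)) as O4.
    pose proof (TU2 h x (-2) 2 (x - 2 * h) Hh0 ltac:(apply absc; lra) ltac:(ring) ltac:(lra) ltac:(lra)) as P1'.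
    pose proof (TU2 h x (-1) 1 (x - h) Hh0 ltac:(apply absc; lra) ltac:(ring) ltac:(lra) ltac:(lra)) as P2'.
    pose proof (TU2 h x 1 1 (x + h) Hh0 ltac:(apply absc; lra) ltac:(ring) ltac:(lra) ltac:(lra)) as P3'.
    pose proof (TU3 h x (-2) 2 (x - 2 * h) Hh0 ltac:(apply absc; lra) ltac:(ring) ltac:(lra) ltac:(lra)) as R1.
    pose proof (TU3 h x (-1) 1 (x - h) Hh0 ltac:(apply absc; lra) ltac:(ring) ltac:(lra) ltac:(lra)) as R2.
    pose proof (TU3 h x 1 1 (x + h) Hh0 ltac:(apply absc; lra) ltac:(ring) ltac:(lra) ltac:(lra)) as R3.
    pose proof (TU3 h x 2 2 (x + 2 * h) Hh0 ltac:(apply absc; lra) ltac:(ring) ltac:(lra) ltac:(lra)) as R4.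
    rewrite sumT0 in O1, O2, O3, O4. rewrite sumT2 in P1', P2', P3'. rewrite sumT3 in R1, R2, R3, R4.
    eapply diss with (V := V) (E1 := Derive_n U 1 x) (E2 := Derive_n U 2 x)
      (F1 := Derive_n U 1 x) (F2 := Derive_n U 2 x) (F3 := Derive_n U 3 x);
      try eassumption; try lra; try (apply Rabs_le_between; lra).
    all: unfold V, B; pose proof (Rabs_pos (U x)); lra. }
  assert (HUt : forall y, Ut y = S y - G y) by (intros y; specialize (Heq y); lra).
  rewrite !HUt.
  match type of X1 with Rabs ?e <= _ => set (e1 := e) in X1 end.
  match type of X2 with Rabs ?e <= _ => set (e2 := e) in X2 end.
  match type of X3 with Rabs ?e <= _ => set (e3 := e) in X3 end.
  match type of X4 with Rabs ?e <= _ => set (e4 := e) in X4 end.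
  match goal with |- Rabs ?e <= _ => replace e with ((e1 + e2 - e3 - e4) / h) end.
  2:{ unfold e1, e2, e3, e4, numflux, p, q. cbv zeta. field. lra. }
  assert (Hh5 : h ^ 5 <= h ^ 4) by (simpl; nra).
  assert (0 <= M4 / 16 + N3 / 12) by lra.
  assert ((M4 / 16 + N3 / 12) * h ^ 5 <= (M4 / 16 + N3 / 12) * h ^ 4) by (apply Rmult_le_compat_l; lra).
  apply Rabs_le_between in X1, X2, X3, X4.
  unfold Rdiv. rewrite Rabs_mult, Rabs_inv, (Rabs_pos_eq h) by lra.
  apply (Rmult_le_reg_r h); [lra|]. rewrite Rmult_assoc, Rinv_l by lra.
  rewrite Rmult_1_r. replace (_ * h ^ 3 * h) with
    (((M4 / 16 + N3 / 12) + 2 * (K * L3 + P1 * (9/16 * L1) ^ 2)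
          + (40 * K * L3 + 36 * Q * L0 * L2) / 16) * h ^ 4) by (simpl; field).
  apply Rabs_le_between. lra.
Qed.

Theorem mainTheorem2 :
  forall (f : R -> R) (avg : R -> R -> R) (u s : R -> R -> R),
    smooth f ->
    (forall a b, Rmin a b <= avg a b <= Rmax a b) ->
    (forall t, smooth (fun y => u y t)) ->
    (forall y, smooth (fun tau => u y tau)) ->
    (forall t, smooth (fun y => s y t)) ->
    (forall y t, Derive (fun tau => u y tau) t + Derive (fun z => f (u z t)) y = s y t) ->
    forall x t : R,
      exists C delta : R, 0 < delta /\
        forall h : R, 0 < h < delta ->
          Rabs (trunc_err f avg u s x t h) <= C * h ^ 3.
Proof.
  intros f avg u s Hf Havg HUs HUt HS Heq x t.
  destruct (core f avg (fun y => u y t) (fun y => Derive (fun tau => u y tau) t)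
    (fun y => s y t) x Hf Havg (HUs t) (fun y => Heq y t)) as [C [d [Hd H]]].
  exists C, d. split; [exact Hd|]. intros h Hh. exact (H h Hh).
Qed.
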